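(* For all positive integers $r,s,k$ with $1\le r,s\le k$, $$\sum_{n\ge0}\mathrm{GF}\big(\mathcal A_{2n+1}^{(k)}(r\to s);w_{AV}\big)x^{2n}=\begin{cases}(-1)^{r+s+1}V_rV_s\dfrac{xQ_{2r-2}(x)\,T_{AV}^{s-1}R_{AV}^{(k-s+1)}Q_{2k+1-2s}(x)}{Q_{2k}(x)},&r<s,\\[2mm] V_r-V_r^2\dfrac{xQ_{2r-2}(x)\,T_{AV}^{r-1}R_{AV}^{(k-r+1)}Q_{2k+1-2r}(x)}{Q_{2k}(x)},&r=s,\\[2mm] (-1)^{r+s+1}V_rV_s\dfrac{xQ_{2s-2}(x)\,T_{AV}^{r-1}R_{AV}^{(k-r+1)}Q_{2k+1-2r}(x)}{Q_{2k}(x)},&r>s,\end{cases}$$ and $$\sum_{n\ge0}\mathrm{GF}\big(\mathcal A_{2n+2}^{(k)}(r\to s);w_{AV}\big)x^{2n+1}=\begin{cases}(-1)^{r+s+1}V_rA_s\dfrac{xQ_{2r-2}(x)\,T_{AV}^{s}Q_{2k-2s}(x)}{Q_{2k}(x)},&r\le s,\\[2mm] (-1)^{r+s+1}V_rA_s\dfrac{xQ_{2s-1}(x)\,T_{AV}^{r-1}R_{AV}^{(k-r+1)}Q_{2k+1-2r}(x)}{Q_{2k}(x)},&r>s.\end{cases}$$ Here $T_{AV}^{a}R_{AV}^{(b)}Q(x)$ means: first apply $R_{AV}^{(b)}$ to $Q(x)$, then apply $T_{AV}^{a}$.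
   Context: $\mathcal A_n^{(k)}(r\to s)$ is the set of integer sequences $(a_1,\dots,a_n)$ with $a_1=r$, $a_n=s$, $1\le a_i\le k$, and $a_1\le a_2\ge a_3\le a_4\ge\cdots$ (i.e. $a_{2j-1}\le a_{2j}$, $a_{2j}\ge a_{2j+1}$ whenever defined). Let $A_1,A_2,\dots,V_1,V_2,\dots$ be indeterminates; the weight of a sequence is $w_{AV}(a_1,\dots,a_n)=\prod_{i=1}^{\lfloor n/2\rfloor}A_{a_{2i}}\prod_{i=1}^{\lceil n/2\rceil}V_{a_{2i-1}}$, and $\mathrm{GF}(\mathcal O;w)=\sum_{t\in\mathcal O}w(t)$. Polynomials $Q_n(x)$: $Q_0=1$, $Q_1=V_1x$, and for $n\ge1$, $Q_{n+1}(x)=V_{(n+2)/2}\,xQ_n(x)-Q_{n-1}(x)$ if $n$ is even, $Q_{n+1}(x)=A_{(n+1)/2}\,xQ_n(x)-Q_{n-1}(x)$ if $n$ is odd. $T_{AV}$ replaces each $A_i$ by $A_{i+1}$ and each $V_i$ by $V_{i+1}$; $R_{AV}^{(j)}$ replaces each $A_i$ by $V_{j+1-i}$ and each $V_i$ by $A_{j+1-i}$. *)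

(* Defs.v *)
From HB Require Import structures.
From mathcomp Require Import all_boot all_order all_algebra.
Set Implicit Arguments. Unset Strict Implicit. Unset Printing Implicit Defensive.
Import Order.TTheory GRing.Theory Num.Theory.
Local Open Scope ring_scope.

(* The indeterminates A_1, A_2, ..., V_1, V_2, ... are modelled by arbitrary
   values A i, V i (i >= 1; index 0 is never used) in an arbitrary
   commutative ring R.  Everything below is a polynomial expression in them,
   so an identity for all R, A, V is the same as the identity over the
   polynomial ring in the indeterminates. *)

Section Defs.
Variable R : comRingType.

(* 1-indexed access a_i of a sequence a = (a_1, ..., a_n). *)
Definition aidx (a : seq nat) (i : nat) : nat := nth 0%N a i.-1.

Definition alt_seq (k r s n : nat) (a : seq nat) : bool :=
  [&& size a == n, aidx a 1 == r, aidx a n == s,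
      all (fun x => (1 <= x <= k)%N) a &
      all (fun i => if odd i then (aidx a i <= aidx a i.+1)%N
                    else (aidx a i.+1 <= aidx a i)%N) (iota 1 n.-1)].

Definition wAV (A V : nat -> R) (n : nat) (a : seq nat) : R :=
  (\prod_(1 <= i < (n./2).+1) A (aidx a (2 * i)%N)) *
  (\prod_(1 <= i < (uphalf n).+1) V (aidx a (2 * i - 1)%N)).

(* GF(A_n^{(k)}(r -> s); w_AV): the sequences are enumerated as n-tuples
   with entries in {0..k} (entries 0 being excluded by alt_seq). *)
Definition GFA (A V : nat -> R) (k r s n : nat) : R :=
  \sum_(t : n.-tuple 'I_k.+1 | alt_seq k r s n (map val t)) wAV A V n (map val t).

(* coefficient in the recursion: Q_{m+1} = c_m x Q_m - Q_{m-1} *)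
Definition Qcoef (A V : nat -> R) (m : nat) : R :=
  if ~~ odd m then V (m.+2./2) else A (m.+1./2).

(* Qpair n = (Q_n, Q_{n+1}) *)
Fixpoint Qpair (A V : nat -> R) (n : nat) : {poly R} * {poly R} :=
  match n with
  | 0%N => (1, (V 1%N)%:P * 'X)
  | n'.+1 => let: (q0, q1) := Qpair A V n' in
             (q1, (Qcoef A V n'.+1)%:P * 'X * q1 - q0)
  end.

Definition Qpoly (A V : nat -> R) (n : nat) : {poly R} := (Qpair A V n).1.

(* A "polynomial in the indeterminates" is a function of their values. *)
Definition AVpoly := (nat -> R) -> (nat -> R) -> {poly R}.

Definition TAV (f : AVpoly) : AVpoly :=
  fun A V => f (fun i => A i.+1) (fun i => V i.+1).

Definition RAV (j : nat) (f : AVpoly) : AVpoly :=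
  fun A V => f (fun i => V (j.+1 - i)%N) (fun i => A (j.+1 - i)%N).

Definition Qn (n : nat) : AVpoly := fun A V => Qpoly A V n.

Definition TRQ (a b m : nat) (A V : nat -> R) : {poly R} :=
  iter a TAV (RAV b (Qn m)) A V.

Definition TQ (a m : nat) (A V : nat -> R) : {poly R} :=
  iter a TAV (Qn m) A V.

(* Formal power series identity  F(x) = N(x) / D(x), where D(0) is a unit
   (here D = Q_{2k}, D(0) = (-1)^k), stated as D(x) F(x) = N(x)
   coefficientwise; F is given by its coefficient sequence. *)
Definition ps_eq_div (F : nat -> R) (N D : {poly R}) : Prop :=
  forall m : nat, \sum_(i < m.+1) D`_i * F (m - i)%N = N`_m.

End Defs.

(* Main.v *)
Require Import Defs.
From HB Require Import structures.
From mathcomp Require Import all_boot all_order all_algebra.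
From mathcomp Require Import zify ring.
From Stdlib Require Import FunctionalExtensionality.
Import Order.TTheory GRing.Theory Num.Theory.
Local Open Scope ring_scope.
Set Implicit Arguments. Unset Strict Implicit. Unset Printing Implicit Defensive.

Section Cont.
Variable R : comNzRingType.

Fixpoint Kp (c : nat -> R) (n : nat) : {poly R} :=
  match n with
  | 0%N => 0
  | n1.+1 => match n1 with
             | 0%N => 1
             | n2.+1 => (c n2)%:P * 'X * Kp c n1 - Kp c n2
             end
  end.

Lemma Kp0 c : Kp c 0 = 0. Proof. by []. Qed.
Lemma Kp1 c : Kp c 1 = 1. Proof. by []. Qed.
Lemma KpSS c n : Kp c n.+2 = (c n)%:P * 'X * Kp c n.+1 - Kp c n.
Proof. by []. Qed.

Lemma Kp_ext c d n : (forall t, (t < n)%N -> c t = d t) -> Kp c n = Kp d n.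
Proof.
move=> H.
suff : Kp c n = Kp d n /\ Kp c n.+1 = Kp d n.+1 by case.
elim: n H => [|n IH] H; first by [].
have [h1 h2] : Kp c n = Kp d n /\ Kp c n.+1 = Kp d n.+1.
  by apply: IH => t Ht; apply: H; lia.
split => //.
rewrite !KpSS h1 h2 H //; lia.
Qed.

Definition sh (c : nat -> R) (a : nat) := fun t => c (a + t)%N.

Lemma Kp_split c a b :
  Kp c (a + b).+1 = Kp c a.+1 * Kp (sh c a) b.+1 - Kp c a * Kp (sh c a.+1) b.
Proof.
suff : Kp c (a + b).+1 = Kp c a.+1 * Kp (sh c a) b.+1 - Kp c a * Kp (sh c a.+1) b /\
       Kp c (a + b.+1).+1 = Kp c a.+1 * Kp (sh c a) b.+2 - Kp c a * Kp (sh c a.+1) b.+1 by case.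
elim: b => [|b [IH1 IH2]].
  rewrite addn0 addn1 [Kp c a.+2]KpSS [Kp (sh c a) 2]KpSS !Kp1 !Kp0 /sh addn0; split; ring.
split => //.
rewrite addnS in IH2; rewrite !addnS KpSS IH2 IH1 [Kp (sh c a) b.+3]KpSS [Kp (sh c a.+1) b.+2]KpSS.
have -> : sh c a b.+1 = c (a + b).+1 by rewrite /sh addnS.
have -> : sh c a.+1 b = c (a + b).+1 by rewrite /sh addSn.
ring.
Qed.

Lemma Kp_bwd c n :
  Kp c n.+2 = (c 0%N)%:P * 'X * Kp (sh c 1) n.+1 - Kp (sh c 2) n.
Proof. have := Kp_split c 1 n; rewrite add1n => ->; rewrite KpSS Kp1 Kp0; ring. Qed.

Lemma Kp_rev n : forall c d : nat -> R,
  (forall t, (t < n)%N -> d t = c (n.-1 - t)%N) -> Kp d n.+1 = Kp c n.+1.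
Proof.
elim/ltn_ind: n => -[|[|n]] IH c d H; first by [].
  by rewrite !KpSS !Kp1 !Kp0 H.
rewrite (KpSS d) (Kp_bwd c).
have -> : d n.+1 = c 0%N by rewrite H //; congr c; lia.
rewrite (IH n.+1 _ (sh c 1)); last first.
  by move=> t Ht; rewrite H ?/sh; [congr c|]; lia.
  by [].
rewrite (IH n _ (sh c 2)) //.
by move=> t Ht; rewrite H ?/sh; [congr c|]; lia.
Qed.

End Cont.

Section QK.
Variable R : comNzRingType.
Implicit Types A V : nat -> R.

Lemma Qpair_Kp A V n : Qpair A V n = (Kp (Qcoef A V) n.+1, Kp (Qcoef A V) n.+2).
Proof.
elim: n => [|n IH] /=; first by rewrite mulr1 subr0.
by rewrite IH.
Qed.

Lemma Qpoly_Kp A V n : Qpoly A V n = Kp (Qcoef A V) n.+1.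
Proof. by rewrite /Qpoly Qpair_Kp. Qed.

Lemma iterTAV (f : AVpoly R) a : forall A V,
  iter a (@TAV R) f A V = f (fun i => A (a + i)%N) (fun i => V (a + i)%N).
Proof. by elim: a => [|a IH] A V //=; rewrite /TAV IH. Qed.

Lemma TQ_Kp A V a m : TQ a m A V = Kp (sh (Qcoef A V) (2 * a)) m.+1.
Proof.
rewrite /TQ iterTAV /Qn Qpoly_Kp; apply: Kp_ext => t _.
rewrite /Qcoef /sh.
have -> : odd (2 * a + t) = odd t by rewrite oddD oddM.
case: (odd t) => /=; congr (_ _); lia.
Qed.

Lemma TRQ_Kp A V k r : (1 <= r <= k)%N ->
  TRQ (r - 1) (k - r + 1) (2 * k + 1 - 2 * r) A V
  = Kp (sh (Qcoef A V) (2 * r - 1)) (2 * k + 2 - 2 * r).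
Proof.
move=> Hr.
have -> : (2 * k + 2 - 2 * r = (2 * k + 1 - 2 * r).+1)%N by lia.
rewrite /TRQ iterTAV /RAV /Qn Qpoly_Kp.
rewrite (@Kp_ext _ _ (fun t => Qcoef A V (2 * k - 1 - t))); last first.
  move=> t Ht; rewrite /Qcoef.
  have -> : odd (2 * k - 1 - t) = ~~ odd t.
    have [o|e] := boolP (odd t).
      have -> : (2 * k - 1 - t = (2 * k - 1 - t)./2.*2)%N by lia.
      by rewrite odd_double.
    have -> : (2 * k - 1 - t = ((2 * k - 1 - t)./2.*2).+1)%N by lia.
    by rewrite /= odd_double.
  have [o|e] := boolP (odd t) => /=; congr (_ _); lia.
apply: Kp_rev => t Ht; rewrite /sh; congr (Qcoef A V); lia.
Qed.

End QK.

Section Ident.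
Variable R : comNzRingType.
Variables (A V : nat -> R) (k r : nat).
Hypothesis Hr : (1 <= r <= k)%N.

Definition g := Qcoef A V.
Definition KK i n := Kp (sh g i) n.
Definition DD := Kp g (2 * k).+1.

Lemma KK0E n : KK 0 n = Kp g n. Proof. by []. Qed.
Lemma KK00 i : KK i 0 = 0. Proof. by []. Qed.
Lemma KK01 i : KK i 1 = 1. Proof. by []. Qed.

Lemma KKfwd i n : KK i n.+2 = (g (i + n))%:P * 'X * KK i n.+1 - KK i n.
Proof. by []. Qed.

Lemma KKbwd i n : KK i n.+2 = (g i)%:P * 'X * KK i.+1 n.+1 - KK i.+2 n.
Proof.
rewrite /KK Kp_bwd /sh addn0.
have -> : (fun t => sh g i (1 + t)) = sh g i.+1.
  by apply: functional_extensionality => t; rewrite /sh addnA addn1.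
have -> : (fun t => sh g i (2 + t)) = sh g i.+2.
  by apply: functional_extensionality => t; rewrite /sh addnA addn2.
by [].
Qed.

Lemma KKsplit a b : KK 0 (a + b).+1 = KK 0 a.+1 * KK a b.+1 - KK 0 a * KK a.+1 b.
Proof. exact: (Kp_split (sh g 0) a b). Qed.

Lemma gE0 v : g (2 * v) = V v.+1.
Proof.
rewrite /g /Qcoef.
have -> : odd (2 * v) = false by rewrite oddM.
by congr V; lia.
Qed.

Lemma gE1 v : g (2 * v).+1 = A v.+1.
Proof.
rewrite /g /Qcoef.
have -> : odd (2 * v).+1 = true by rewrite /= oddM.
by congr A; lia.
Qed.

Definition K2 := KK (2 * r - 1) (2 * k + 2 - 2 * r).

Definition Nodd s :=
  if (r < s)%N then
    ((-1) ^+ (r + s + 1) * V r * V s)%:P * 'X * KK 0 (2 * r - 1)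
      * KK (2 * s - 1) (2 * k + 2 - 2 * s)
  else if r == s then
    (V r)%:P * DD - (V r ^+ 2)%:P * 'X * KK 0 (2 * r - 1) * K2
  else ((-1) ^+ (r + s + 1) * V r * V s)%:P * 'X * KK 0 (2 * s - 1) * K2.

Definition Neven s :=
  if (r <= s)%N then
    ((-1) ^+ (r + s + 1) * V r * A s)%:P * 'X * KK 0 (2 * r - 1)
      * KK (2 * s) (2 * k - 2 * s).+1
  else ((-1) ^+ (r + s + 1) * V r * A s)%:P * 'X * KK 0 (2 * s) * K2.

Definition Ycand v :=
  ((-1) ^+ (r + v + 1) * V r)%:P *
  (if (v < r)%N then KK 0 (2 * v) * K2
   else KK 0 (2 * r - 1) * KK (2 * v) (2 * k + 1 - 2 * v)).

Definition Zcand w :=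
  ((-1) ^+ (r + w + 1) * V r)%:P *
  (if (w <= r)%N then KK 0 (2 * w - 1) * K2
   else KK 0 (2 * r - 1) * KK (2 * w - 1) (2 * k + 2 - 2 * w)).

Lemma sgn_even n : ~~ odd n -> (-1) ^+ n = 1 :> R.
Proof. by move=> h; rewrite -signr_odd (negbTE h). Qed.
Lemma sgn_odd n : odd n -> (-1) ^+ n = -1 :> R.
Proof. by move=> h; rewrite -signr_odd h expr1. Qed.

Lemma Ystep v : (v < k)%N -> Ycand v + Nodd v.+1 = Ycand v.+1.
Proof.
move=> Hv; rewrite /Ycand /Nodd.
have Es : (r + v.+1 + 1 = (r + v + 1).+1)%N by lia.
rewrite Es exprS.
case: (ltngtP v.+1 r) => H.
-   have -> : (2 * v.+1 = (2 * v).+2)%N by lia.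
  have -> : ((2 * v).+2 - 1 = (2 * v).+1)%N by lia.
  rewrite KKfwd add0n gE0; ring.
-   have -> : (2 * v.+1 - 1 = (2 * v).+1)%N by lia.
  have -> : (2 * k + 2 - 2 * v.+1 = (2 * k - 2 * v - 1).+1)%N by lia.
  have -> : (2 * k + 1 - 2 * v = (2 * k - 2 * v - 1).+2)%N by lia.
  have -> : (2 * k + 1 - 2 * v.+1 = (2 * k - 2 * v - 1))%N by lia.
  have -> : (2 * v.+1 = (2 * v).+2)%N by lia.
  rewrite [KK (2 * v) _]KKbwd gE0; ring.
- rewrite /K2 -H ?ltnSn ?eqxx.
  have -> : (2 * v.+1 - 1 = (2 * v).+1)%N by lia.
  have -> : (2 * v.+1 = (2 * v).+2)%N by lia.
  have -> : (2 * k + 2 - (2 * v).+2 = (2 * k - 2 * v - 1).+1)%N by lia.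
  have -> : (2 * k + 1 - (2 * v).+2 = (2 * k - 2 * v - 1))%N by lia.
  have -> : DD = KK 0 ((2 * v).+1 + (2 * k - 2 * v - 1)).+1.
    by rewrite KK0E /DD; congr Kp; lia.
  rewrite KKsplit KKfwd add0n gE0.
  rewrite (@sgn_even (v.+1 + v + 1)); last by lia.
  ring.
Qed.

Lemma Zstep u : (u < k)%N -> Neven u.+1 + Zcand u.+2 = Zcand u.+1.
Proof.
move=> Hu; rewrite /Zcand /Neven.
have Es : (r + u.+2 + 1 = (r + u.+1 + 1).+1)%N by lia.
rewrite Es exprS.
have E1 : (2 * u.+1 - 1 = (2 * u).+1)%N by lia.
have E2 : (2 * u.+2 - 1 = (2 * u).+3)%N by lia.
have E3 : (2 * u.+1 = (2 * u).+2)%N by lia.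
rewrite E1 E2.
case: (ltngtP u.+1 r) => H.
- rewrite E3 [KK 0 (2 * u).+3]KKfwd add0n gE1; ring.
- have -> : (2 * k + 2 - 2 * u.+1 = (2 * k - 2 * u - 2).+2)%N by lia.
  have -> : (2 * k + 2 - 2 * u.+2 = (2 * k - 2 * u - 2))%N by lia.
  have -> : ((2 * k - 2 * u.+1).+1 = (2 * k - 2 * u - 2).+1)%N by lia.
  rewrite E3 [KK (2 * u).+1 _]KKbwd gE1; ring.
- rewrite /K2 -H ?leqnn E1.
  have -> : (2 * k + 2 - 2 * u.+1 = (2 * k - 2 * u - 2).+2)%N by lia.
  have -> : (2 * k + 2 - 2 * u.+2 = (2 * k - 2 * u - 2))%N by lia.
  have -> : ((2 * k - 2 * u.+1).+1 = (2 * k - 2 * u - 2).+1)%N by lia.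
  rewrite E3 [KK (2 * u).+1 _]KKbwd gE1; ring.
Qed.

Lemma Y0 : Ycand 0 = 0.
Proof. rewrite /Ycand; have -> : (0 < r)%N by lia. by rewrite muln0 KK00 mul0r mulr0. Qed.

Lemma Zend : Zcand k.+1 = 0.
Proof.
rewrite /Zcand; have -> : (k.+1 <= r)%N = false by lia.
have -> : (2 * k + 2 - 2 * k.+1 = 0)%N by lia.
by rewrite KK00 !mulr0.
Qed.

Lemma Ge v : (v <= k)%N -> Neven v = (A v)%:P * 'X * Ycand v.
Proof.
move=> Hv; rewrite /Neven /Ycand leqNgt.
have -> : ((2 * k - 2 * v).+1 = 2 * k + 1 - 2 * v)%N by lia.
case: (v < r)%N => /=.
- ring.
- ring.
Qed.

Lemma Fo w : Nodd w = (if w == r then (V r)%:P * DD else 0) + (V w)%:P * 'X * Zcand w.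
Proof.
rewrite /Nodd /Zcand.
case: (ltngtP r w) => H /=.
- rewrite add0r; ring.
- rewrite add0r; ring.
- rewrite -H (@sgn_odd (r + r + 1)); last by lia.
  rewrite /K2; ring.
Qed.

Lemma Ysum v : (v <= k)%N -> \sum_(1 <= u < v.+1) Nodd u = Ycand v.
Proof.
elim: v => [|v IH] Hv; first by rewrite big_nil Y0.
rewrite big_nat_recr //= IH; last by lia.
by rewrite Ystep //.
Qed.

Lemma Zsum j : (j <= k)%N -> \sum_(k.+1 - j <= v < k.+1) Neven v = Zcand (k.+1 - j).
Proof.
elim: j => [|j IH] Hj; first by rewrite subn0 big_geq // Zend.
have -> : (k.+1 - j.+1 = (k - j - 1).+1)%N by lia.
rewrite big_ltn; last by lia.
have -> : ((k - j - 1).+2 = k.+1 - j)%N by lia.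
rewrite IH; last by lia.
have -> : (k.+1 - j = (k - j - 1).+2)%N by lia.
by rewrite Zstep //; lia.
Qed.

End Ident.

Section Tup.
Variable R : comNzRingType.
Variable T : finType.

Lemma tuple_split_rcons n (u : n.+1.-tuple T) :
  rcons (belast (thead u) (behead u)) (last (thead u) (behead u)) = u.
Proof. by rewrite -lastI {3}(tuple_eta u). Qed.

Definition hsplit n (p : n.-tuple T * T) : n.+1.-tuple T := [tuple of rcons p.1 p.2].
Definition hjoin n (u : n.+1.-tuple T) : n.-tuple T * T :=
  ([tuple of belast (thead u) (behead u)], last (thead u) (behead u)).

Lemma hsplitK n : cancel (@hjoin n) (@hsplit n).
Proof. by move=> u; apply: val_inj; rewrite /= tuple_split_rcons. Qed.

Lemma hjoinK n : cancel (@hsplit n) (@hjoin n).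
Proof.
move=> [t x].
have E := tuple_split_rcons (hsplit (t, x)).
have := rcons_inj E => -[E1 E2].
rewrite /hjoin; congr pair; last by [].
by apply: val_inj; rewrite /= E1.
Qed.

Lemma sum_tuple_rcons n (F : n.+1.-tuple T -> R) :
  \sum_(u : n.+1.-tuple T) F u = \sum_(t : n.-tuple T) \sum_(x : T) F (hsplit (t, x)).
Proof.
rewrite (reindex (@hsplit n)) /=; last first.
  by exists (@hjoin n) => ? _; [apply: hjoinK | apply: hsplitK].
by rewrite pair_big.
Qed.

End Tup.

Section SeqL.
Variable R : comNzRingType.
Variables (A V : nat -> R) (k : nat).

Lemma aidx_rcons (a : seq nat) y n i : size a = n -> (1 <= i <= n)%N ->
  aidx (rcons a y) i = aidx a i.
Proof.
move=> Ha Hi; rewrite /aidx nth_rcons Ha.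
by have -> : (i.-1 < n)%N by lia.
Qed.

Lemma aidx_rcons_last (a : seq nat) y n : size a = n -> aidx (rcons a y) n.+1 = y.
Proof.
move=> Ha; rewrite /aidx nth_rcons Ha /= ltnn eqxx //.
Qed.

Lemma alt_rcons r s n (a : seq nat) y : size a = n -> (1 <= n)%N ->
  alt_seq k r s n.+1 (rcons a y) =
  [&& alt_seq k r (aidx a n) n a, y == s, (1 <= y <= k)%N &
      (if odd n then aidx a n <= y else y <= aidx a n)%N].
Proof.
move=> Ha Hn; rewrite /alt_seq size_rcons Ha eqxx /=.
rewrite (aidx_rcons y Ha) ?Hn // aidx_rcons_last // all_rcons eqxx /=.
have -> : iota 1 n = iota 1 n.-1 ++ [:: n].
  by case: n Ha Hn => // n' _ _; have := iotaD 1 n' 1; rewrite addn1 add1n.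
rewrite all_cat /= andbT.
rewrite (aidx_rcons y Ha (i:=n)); last by lia.
rewrite aidx_rcons_last //.
have -> : all (fun i => if odd i then (aidx (rcons a y) i <= aidx (rcons a y) i.+1)%N
                      else (aidx (rcons a y) i.+1 <= aidx (rcons a y) i)%N) (iota 1 n.-1)
        = all (fun i => if odd i then (aidx a i <= aidx a i.+1)%N
                      else (aidx a i.+1 <= aidx a i)%N) (iota 1 n.-1).
  apply: eq_in_all => i; rewrite mem_iota => Hi.
  rewrite (aidx_rcons y Ha (i:=i)); last by lia.
  rewrite (aidx_rcons y Ha (i:=i.+1)); last by lia.
  by [].
rewrite eqxx.
set b1 := aidx a 1 == r. set b2 := y == s. set b4 := all _ a.
set b5 := all _ (iota 1 n.-1). set b6 := if odd n then _ else _.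
by case: (_ <= y <= k)%N; case: b1; case: b2; case: b4; case: b5; case: b6.
Qed.

Lemma wAV_rcons n (a : seq nat) y : size a = n ->
  wAV A V n.+1 (rcons a y) = wAV A V n a * (if odd n then A y else V y).
Proof.
move=> Ha; rewrite /wAV.
have EA : forall m, (m <= n./2)%N ->
  \prod_(1 <= i < m.+1) A (aidx (rcons a y) (2 * i)) = \prod_(1 <= i < m.+1) A (aidx a (2 * i)).
  move=> m Hm; apply: eq_big_nat => i Hi; rewrite (aidx_rcons y Ha) //; lia.
have EV : forall m, (m <= uphalf n)%N ->
  \prod_(1 <= i < m.+1) V (aidx (rcons a y) (2 * i - 1)) = \prod_(1 <= i < m.+1) V (aidx a (2 * i - 1)).
  move=> m Hm; apply: eq_big_nat => i Hi; rewrite (aidx_rcons y Ha) //; lia.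
have [o|e] := boolP (odd n).
- have -> : (n.+1./2 = (n./2).+1)%N by lia.
  have -> : (uphalf n.+1 = uphalf n)%N by lia.
  rewrite big_nat_recr /=; last by lia.
  rewrite EA // EV //.
  have -> : (2 * (n./2).+1 = n.+1)%N by lia.
  rewrite aidx_rcons_last //; ring.
- have -> : (n.+1./2 = n./2)%N by lia.
  have -> : (uphalf n.+1 = (uphalf n).+1)%N by lia.
  rewrite [X in _ * X]big_nat_recr /=; last by lia.
  rewrite EA // EV //.
  have -> : (2 * (uphalf n).+1 - 1 = n.+1)%N by lia.
  rewrite aidx_rcons_last //; ring.
Qed.

End SeqL.

Section GFrec.
Variable R : comNzRingType.
Variables (A V : nat -> R) (k : nat).

Lemma alt_last r u n (a : seq nat) :
  alt_seq k r u n a = alt_seq k r (aidx a n) n a && (aidx a n == u).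
Proof.
rewrite /alt_seq eqxx.
by case: (size a == n); case: (aidx a 1 == r); case: (aidx a n == u);
   case: (all _ a); case: (all _ (iota _ _)).
Qed.

Lemma alt_bound r u n (a : seq nat) : (1 <= n)%N -> alt_seq k r u n a -> (u <= k)%N.
Proof.
move=> Hn /and5P [/eqP Ha _ /eqP <- Hall _].
move/(all_nthP 0): Hall => H.
have Hlt : (n.-1 < size a)%N by lia.
by have /andP [_ ->] := H n.-1 Hlt.
Qed.

Lemma sum_ord_pick (F : nat -> R) (P : pred nat) j :
  \sum_(x < k.+1) (if P x && (x == j :> nat) then F x else 0) = if (j <= k)%N && P j then F j else 0.
Proof. by rewrite -big_mkcond big_ord1_cond_eq ltnS. Qed.

Lemma GFA_S r s n : (1 <= n)%N -> (1 <= s <= k)%N ->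
  GFA A V k r s n.+1 = (if odd n then A s else V s) *
    \sum_(u < k.+1 | if odd n then (u <= s)%N else (s <= u)%N) GFA A V k r u n.
Proof.
move=> Hn Hs; rewrite /GFA big_mkcond sum_tuple_rcons.
symmetry.
rewrite mulr_sumr.
under eq_bigr do rewrite mulr_sumr big_mkcond.
rewrite exchange_big /=.
symmetry.
apply: eq_bigr => t _.
set a := map val t.
have Ha : size a = n by rewrite size_map size_tuple.
set j := aidx a n.
set c := (if odd n then A s else V s).
set Q := fun x : nat => [&& alt_seq k r j n a, (1 <= x <= k)%N &
                           (if odd n then j <= x else x <= j)%N].
set P := fun u : nat => if odd n then (u <= s)%N else (s <= u)%N.
rewrite (eq_bigr (fun x : 'I_k.+1 => if Q x && (x == s :> nat)
             then wAV A V n a * (if odd n then A x else V x) else 0)); last first.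
  move=> x _.
  have -> : map val (hsplit (t, x)) = rcons a (val x) by rewrite /= map_rcons.
  rewrite alt_rcons // wAV_rcons // /Q.
  by case: (alt_seq _ _ _ _ _); case: (val x == s); case: (_ <= val x <= k)%N;
     case: (if odd n then _ else _).
rewrite (sum_ord_pick (fun x => wAV A V n a * (if odd n then A x else V x)) Q s).
rewrite big_mkcond (eq_bigr (fun u : 'I_k.+1 => if (P u && alt_seq k r j n a) && (u == j :> nat)
             then c * wAV A V n a else 0)); last first.
  move=> u _.
  rewrite -/a alt_last -/j [j == _]eq_sym /P.
  case: (if odd n then _ else _); case: (alt_seq _ _ _ _ _); case: (val u == j) => //=;
    by rewrite ?mulr0.
rewrite (sum_ord_pick (fun _ => c * wAV A V n a) (fun u => P u && alt_seq k r j n a) j).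
have Hsk : (s <= k)%N by lia.
rewrite Hsk /= /Q.
have [Halt|Halt] := boolP (alt_seq k r j n a); last by rewrite !andbF.
have Hj : (j <= k)%N by exact: (alt_bound Hn Halt).
rewrite Hj /= andbT /P.
have -> : (1 <= s <= k)%N by [].
case: (if odd n then _ else _) => //=; rewrite /c; ring.
Qed.

Lemma GFA_1 r s : (1 <= r <= k)%N ->
  GFA A V k r s 1 = if s == r then V r else 0.
Proof.
move=> Hr; rewrite /GFA big_mkcond sum_tuple_rcons.
have E : forall t : 0.-tuple 'I_k.+1, \sum_(x < k.+1) (if alt_seq k r s 1 (map val (hsplit (t, x)))
            then wAV A V 1 (map val (hsplit (t, x))) else 0)
        = if (r <= k)%N && (s == r) then V r else 0.
  move=> t; rewrite -(sum_ord_pick V (fun _ => s == r) r); apply: eq_bigr => x _ /=.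
  have -> : map val (hsplit (t, x)) = [:: val x] by rewrite /= tuple0.
  rewrite /alt_seq /wAV /aidx /= big_geq // mul1r.
  rewrite big_nat1 /=.
  case: (boolP (val x == r)) => [/eqP ->|_]; last by rewrite !andbF.
  rewrite andbT.
  case: (boolP (r == s)) => [/eqP <-|Hrs]; first by rewrite !eqxx /= Hr.
  by rewrite eq_sym (negbTE Hrs).
under eq_bigr do rewrite E.
rewrite sumr_const card_tuple expn0 mulr1n.
have -> : (r <= k)%N by lia.
by [].
Qed.

End GFrec.

Section Main.
Variable R : comNzRingType.
Variables (A V : nat -> R) (k r : nat).
Hypothesis Hr : (1 <= r <= k)%N.

Lemma alt_pos u n (a : seq nat) : (1 <= n)%N -> alt_seq k r u n a -> (1 <= u)%N.
Proof.
move=> Hn /and5P [/eqP Ha _ /eqP <- Hall _].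
move/(all_nthP 0): Hall => H.
have Hlt : (n.-1 < size a)%N by lia.
by have /andP [-> _] := H n.-1 Hlt.
Qed.

Lemma GFA_0 n : (1 <= n)%N -> GFA A V k r 0 n = 0.
Proof.
move=> Hn; rewrite /GFA big1 // => t Ht.
by have := alt_pos Hn Ht.
Qed.

Definition FF u m := if ~~ odd m then GFA A V k r u m.+1 else 0.
Definition GG u m := if odd m then GFA A V k r u m.+1 else 0.

Lemma FF0v m : FF 0 m = 0.
Proof. by rewrite /FF GFA_0 //; case: (~~ odd m). Qed.
Lemma GG0v m : GG 0 m = 0.
Proof. by rewrite /GG GFA_0 //; case: (odd m). Qed.

Lemma sum_le u (f : nat -> R) : (u <= k)%N ->
  \sum_(v < k.+1 | (v <= u)%N) f v = \sum_(1 <= v < u.+1) f v + f 0%N.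
Proof.
move=> Hu.
rewrite -(big_mkord (fun v => v <= u)%N f).
rewrite -(big_nat_widen 0 u.+1 k.+1 xpredT) //.
by rewrite big_ltn // addrC.
Qed.

Lemma sum_ge u (f : nat -> R) :
  \sum_(v < k.+1 | (u <= v)%N) f v = \sum_(u <= v < k.+1) f v.
Proof. by rewrite big_geq_mkord. Qed.

Lemma FF_0 u : FF u 0 = if u == r then V r else 0.
Proof. by rewrite /FF /= GFA_1. Qed.
Lemma GG_0 u : GG u 0 = 0.
Proof. by []. Qed.

Lemma FF_S u m : (1 <= u <= k)%N ->
  FF u m.+1 = V u * \sum_(u <= v < k.+1) GG v m.
Proof.
move=> Hu; rewrite /FF /GG.
have Eo : odd m.+1 = ~~ odd m by [].
rewrite Eo negbK.
case: (boolP (odd m)) => o.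
- by rewrite GFA_S // Eo o /= (sum_ge u (fun v => GFA A V k r v m.+1)).
- by rewrite big1 ?mulr0 // => v _; rewrite ?(negbTE o).
Qed.

Lemma GG_S u m : (1 <= u <= k)%N ->
  GG u m.+1 = A u * \sum_(1 <= v < u.+1) FF v m.
Proof.
move=> Hu; rewrite /FF /GG.
have Eo : odd m.+1 = ~~ odd m by [].
rewrite Eo.
case: (boolP (odd m)) => o /=.
- by rewrite big1 ?mulr0 // => v _; rewrite ?o.
- rewrite GFA_S // Eo o /= (@sum_le u (fun v => GFA A V k r v m.+1)); last by lia.
  rewrite GFA_0 // addr0.
  by apply: congr2 => //; apply: eq_bigr => v _; rewrite o.
Qed.

Definition conv (P : {poly R}) (f : nat -> R) m := \sum_(i < m.+1) P`_i * f (m - i)%N.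

Lemma conv_S (P : {poly R}) f m :
  conv P f m.+1 = \sum_(i < m.+1) P`_i * f (m - i).+1 + P`_m.+1 * f 0%N.
Proof.
rewrite /conv big_ord_recr /= subnn; congr (_ + _).
by apply: eq_bigr => i _; rewrite /= subSn // -ltnS.
Qed.

Lemma main_ind m : forall u, (1 <= u <= k)%N ->
  conv (DD A V k) (FF u) m = (Nodd A V k r u)`_m /\ conv (DD A V k) (GG u) m = (Neven A V k r u)`_m.
Proof.
elim: m => [|m IH] u Hu.
  rewrite /conv !big_ord1 /= subnn FF_0 GG_0 (Fo _ _ Hr) (Ge _ _ Hr); last by lia.
  split.
    rewrite coefD -mulrA coefCM coefXM /= mulr0 addr0.
    by case: (u == r); rewrite ?coefCM ?coef0 ?mulr0 // mulrC.
  by rewrite -mulrA coefCM coefXM /= !mulr0.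
split.
- rewrite conv_S FF_0.
  under eq_bigr do rewrite FF_S // !mulr_sumr.
  rewrite exchange_big /=.
  rewrite (Fo _ _ Hr) coefD -mulrA coefCM coefXM /=.
  have -> : u = (k.+1 - (k.+1 - u))%N by lia.
  rewrite -(Zsum _ _ Hr); last by lia.
  have -> : (k.+1 - (k.+1 - u) = u)%N by lia.
  rewrite coef_sum mulr_sumr.
  rewrite addrC; congr (_ + _).
    by case: (u == r); rewrite ?coefCM ?coef0 ?mulr0 // mulrC.
  apply: eq_big_nat => v Hv.
  have Hv' : (1 <= v <= k)%N by lia.
  rewrite -(proj2 (IH v Hv')) /conv mulr_sumr.
  by apply: eq_bigr => i _; ring.
- rewrite conv_S GG_0 mulr0 addr0.
  under eq_bigr do rewrite GG_S // !mulr_sumr.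
  rewrite exchange_big /=.
  rewrite (Ge _ _ Hr); last by lia.
  rewrite -mulrA coefCM coefXM /=.
  rewrite -(Ysum _ _ Hr); last by lia.
  rewrite coef_sum mulr_sumr.
  apply: eq_big_nat => v Hv.
  have Hv' : (1 <= v <= k)%N by lia.
  rewrite -(proj1 (IH v Hv')) /conv mulr_sumr.
  by apply: eq_bigr => i _; ring.
Qed.

End Main.

Unset Implicit Arguments.

Theorem theorem28 (R : comRingType) (A V : nat -> R) (k r s : nat) :
  (1 <= r <= k)%N -> (1 <= s <= k)%N ->
  ps_eq_div
    (fun m => if ~~ odd m then GFA A V k r s m.+1 else 0)
    (if (r < s)%N then
       ((-1) ^+ (r + s + 1) * V r * V s)%:P * 'X * Qpoly A V (2 * r - 2)
         * TRQ (s - 1) (k - s + 1) (2 * k + 1 - 2 * s) A V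
     else if r == s then
       (V r)%:P * Qpoly A V (2 * k)
       - (V r ^+ 2)%:P * 'X * Qpoly A V (2 * r - 2)
         * TRQ (r - 1) (k - r + 1) (2 * k + 1 - 2 * r) A V
     else
       ((-1) ^+ (r + s + 1) * V r * V s)%:P * 'X * Qpoly A V (2 * s - 2)
         * TRQ (r - 1) (k - r + 1) (2 * k + 1 - 2 * r) A V)
    (Qpoly A V (2 * k))
  /\
  ps_eq_div
    (fun m => if odd m then GFA A V k r s m.+1 else 0)
    (if (r <= s)%N then
       ((-1) ^+ (r + s + 1) * V r * A s)%:P * 'X * Qpoly A V (2 * r - 2)
         * TQ s (2 * k - 2 * s) A V
     else
       ((-1) ^+ (r + s + 1) * V r * A s)%:P * 'X * Qpoly A V (2 * s - 1)
         * TRQ (r - 1) (k - r + 1) (2 * k + 1 - 2 * r) A V)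
    (Qpoly A V (2 * k)).
Proof.
move=> Hr Hs.
have ED : Qpoly A V (2 * k) = DD A V k by rewrite Qpoly_Kp.
have Er : ((2 * r - 2).+1 = 2 * r - 1)%N by lia.
have Es1 : ((2 * s - 2).+1 = 2 * s - 1)%N by lia.
have Es2 : ((2 * s - 1).+1 = 2 * s)%N by lia.
split => m.
- have -> : (if (r < s)%N then
       ((-1) ^+ (r + s + 1) * V r * V s)%:P * 'X * Qpoly A V (2 * r - 2)
         * TRQ (s - 1) (k - s + 1) (2 * k + 1 - 2 * s) A V
     else if r == s then
       (V r)%:P * Qpoly A V (2 * k)
       - (V r ^+ 2)%:P * 'X * Qpoly A V (2 * r - 2)
         * TRQ (r - 1) (k - r + 1) (2 * k + 1 - 2 * r) A V
     else
       ((-1) ^+ (r + s + 1) * V r * V s)%:P * 'X * Qpoly A V (2 * s - 2)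
         * TRQ (r - 1) (k - r + 1) (2 * k + 1 - 2 * r) A V) = Nodd A V k r s.
    rewrite ED !Qpoly_Kp (TRQ_Kp _ _ Hs) (TRQ_Kp _ _ Hr) Er Es1.
    by [].
  have H := proj1 (main_ind A V Hr m Hs); rewrite /conv /FF in H.
  rewrite ED; exact H.
- have -> : (if (r <= s)%N then
       ((-1) ^+ (r + s + 1) * V r * A s)%:P * 'X * Qpoly A V (2 * r - 2)
         * TQ s (2 * k - 2 * s) A V
     else
       ((-1) ^+ (r + s + 1) * V r * A s)%:P * 'X * Qpoly A V (2 * s - 1)
         * TRQ (r - 1) (k - r + 1) (2 * k + 1 - 2 * r) A V) = Neven A V k r s.
    rewrite !Qpoly_Kp TQ_Kp (TRQ_Kp _ _ Hr) Er Es2.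
    by [].
  have H := proj2 (main_ind A V Hr m Hs); rewrite /conv /GG in H.
  rewrite ED; exact H.
Qed.
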